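(* Let $G$ be a connected graph of order $n\geq 2$. The following are pairwise equivalent: (i) $\mathrm{ldim}_f(G)=\frac{n}{2}$; (ii) every vertex of $G$ has a true twin, i.e. for every $u\in V(G)$ there is $v\neq u$ with $N[u]=N[v]$; (iii) there exist a graph $H$ and a family $\mathcal I=\{I_v\}_{v\in V(H)}$ of complete graphs each of order at least $2$ such that $G$ is isomorphic to the generalized lexicographic product $H[\mathcal I]$.
   Context: All graphs are finite, simple and connected; $d(x,y)$ is the shortest-path distance. For an edge $uv$, $L(uv)=\{x\in V(G): d(u,x)\neq d(v,x)\}$. A function $f:V(G)\to[0,1]$ is a local resolving function of $G$ if $\sum_{x\in L(uv)}f(x)\geq 1$ for every edge $uv$; $\mathrm{ldim}_f(G)$ is the minimum of $\sum_{v\in V(G)}f(v)$ over all local resolving functions. $N[u]$ is the closed neighborhood of $u$. Given a graph $H$ and graphs $I_v$ indexed by $v\in V(H)$, the generalized lexicographic product $H[\mathcal I]$ has vertex set $\{(v,w): v\in V(H), w\in V(I_v)\}$, with $(v_1,w_1)(v_2,w_2)$ an edge iff $v_1v_2\in E(H)$, or $v_1=v_2$ and $w_1w_2\in E(I_{v_1})$. *)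

(* Defs.v *)
From HB Require Import structures.
From mathcomp Require Import all_boot all_order all_algebra.
Set Implicit Arguments. Unset Strict Implicit. Unset Printing Implicit Defensive.
Import Order.TTheory GRing.Theory Num.Theory.

Definition simple_graph (T : finType) (e : rel T) : Prop :=
  symmetric e /\ irreflexive e.

Definition connected_graph (T : finType) (e : rel T) : Prop :=
  forall x y : T, connect e x y.

Fixpoint ball (T : finType) (e : rel T) (k : nat) (x : T) : {set T} :=
  match k with
  | 0 => [set x]
  | k'.+1 => ball e k' x :|: [set z | [exists y in ball e k' x, e y z]]
  end.

(* Shortest-path distance: least k with y within distance k of x
   (any two vertices of a connected graph are at distance < #|T|). *)
Definition dist (T : finType) (e : rel T) (x y : T) : nat :=
  find (fun k => y \in ball e k x) (iota 0 #|T|).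

Definition Lset (T : finType) (e : rel T) (u v : T) : {set T} :=
  [set x | dist e u x != dist e v x].

Local Open Scope ring_scope.

Definition local_resolving_fun (R : realFieldType) (T : finType) (e : rel T)
  (f : T -> R) : Prop :=
  (forall x, 0 <= f x <= 1) /\
  (forall u v, e u v -> 1 <= \sum_(x in Lset e u v) f x).

Definition ldimf_is (R : realFieldType) (T : finType) (e : rel T) (r : R) : Prop :=
  (exists f : T -> R, local_resolving_fun e f /\ \sum_(x : T) f x = r) /\
  (forall f : T -> R, local_resolving_fun e f -> r <= \sum_(x : T) f x).

Local Close Scope ring_scope.

Definition closed_nbhd (T : finType) (e : rel T) (u : T) : {set T} :=
  [set w | (w == u) || e u w].

Definition lexprod_rel (VH : finType) (eH : rel VH) (W : VH -> finType)
  (eI : forall v, rel (W v)) : rel {v : VH & W v} :=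
  fun p q =>
    eH (tag p) (tag q) ||
    ((tag p == tag q) && eI (tag q) (tagged_as q p) (tagged q)).

(* Main.v *)
Require Import Defs.
From HB Require Import structures.
From mathcomp Require Import all_boot all_order all_algebra.
From mathcomp Require Import lra.
Import Order.TTheory GRing.Theory Num.Theory.
Set Implicit Arguments. Unset Strict Implicit.

Section Arith.
Local Open Scope ring_scope.
Variable R : realFieldType.
Lemma ar1 (a b : R) : a < 2^-1 -> b < 2^-1 -> 1 <= a + b -> False.
Proof. lra. Qed.
Lemma ar2 (a b : R) : a < 2^-1 -> 1 <= a + b -> 2^-1 <= b.
Proof. lra. Qed.
Lemma ar3 (a b : R) : 1 <= a + b -> 0 <= a - 2^-1 + (b - 2^-1).
Proof. lra. Qed.
Lemma ar4 (a : R) : ~~ (a < 2^-1) -> 0 <= a - 2^-1.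
Proof. rewrite -leNgt; lra. Qed.
Lemma ar6 : (1 : R) <= 2^-1 + 2^-1.
Proof. lra. Qed.
Lemma ar7 : (2^-1 : R) <= 1.
Proof. lra. Qed.
Lemma ar8 (a : R) : a + 2^-1 <= a -> False.
Proof. lra. Qed.
Lemma ar5 (a : R) : 0 <= a -> a + 0 = a.
Proof. lra. Qed.
End Arith.

Section S.
Variables (T : finType) (e : rel T).
Hypothesis (esy : symmetric e) (eirr : irreflexive e).

Lemma ball1 u : ball e 1 u = closed_nbhd e u.
Proof.
apply/setP => z; rewrite !inE; congr (_ || _).
apply/existsP/idP => [[y /andP[]]|h]; first by rewrite inE => /eqP->.
by exists u; rewrite inE eqxx.
Qed.

Lemma ball_twin u v : closed_nbhd e u = closed_nbhd e v ->
  forall k, 0 < k -> ball e k u = ball e k v.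
Proof.
move=> H; elim=> // k IH _; case: k IH => [|k] IH; first by rewrite !ball1.
by rewrite /= -!/(ball e k.+1 _) IH.
Qed.

Lemma dist_twin u v x : closed_nbhd e u = closed_nbhd e v ->
  x != u -> x != v -> dist e u x = dist e v x.
Proof.
move=> H xu xv; rewrite /dist; apply: eq_find => -[|k].
  by rewrite /= !inE (negbTE xu) (negbTE xv).
by rewrite (ball_twin H).
Qed.

Lemma dist0 a : dist e a a = 0.
Proof. by rewrite /dist; case: #|T| => //= n; rewrite inE eqxx. Qed.

Hypothesis card2 : 1 < #|T|.

Lemma dist1 a b : e a b -> dist e a b = 1.
Proof.
move=> hab; rewrite /dist; case: #|T| card2 => [|[|n]] //= _.
rewrite inE; have ->: (b == a) = false.
  by apply/negbTE; apply: contraTneq hab => ->; rewrite eirr.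
by rewrite -/(ball e 1 a) ball1 !inE hab orbT.
Qed.

Lemma dist1_nbhd a b : dist e a b = 1 -> b \in closed_nbhd e a.
Proof.
rewrite /dist; case: #|T| card2 => [|[|n]] //= _.
case: ifP => //; rewrite -/(ball e 1 a) ball1.
by case: ifP.
Qed.

Lemma Lset_l u v : e u v -> u \in Lset e u v.
Proof. by move=> h; rewrite inE dist0 dist1 // esy. Qed.
Lemma Lset_r u v : e u v -> v \in Lset e u v.
Proof. by move=> h; rewrite inE dist0 dist1. Qed.

Lemma Lset_twin u v : closed_nbhd e u = closed_nbhd e v ->
  Lset e u v \subset [set u; v].
Proof.
move=> H; apply/subsetP => x; rewrite !inE; apply: contraR.
by rewrite negb_or => /andP[a b]; rewrite (dist_twin H).
Qed.

Lemma Lset_sep u v x : e u v -> x \in closed_nbhd e u -> x \notin closed_nbhd e v ->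
  x \in Lset e u v.
Proof.
move=> huv hu hv; rewrite inE; have xu : x != u.
  by apply: contraNneq hv => ->; rewrite inE esy huv orbT.
move: hu; rewrite inE (negbTE xu) /= => hux; rewrite dist1 //.
by apply: contraNneq hv => /esym /dist1_nbhd.
Qed.

Lemma twin_adj u v : v != u -> closed_nbhd e u = closed_nbhd e v -> e u v.
Proof.
move=> vu H; have: v \in closed_nbhd e u by rewrite H inE eqxx.
by rewrite inE (negbTE vu).
Qed.
Local Open Scope ring_scope.
Variable R : realFieldType.

Lemma sum_sub (A B : {set T}) (F : T -> R) : A \subset B ->
  {in B, forall z, 0 <= F z} -> \sum_(z in A) F z <= \sum_(z in B) F z.
Proof.
move=> AB F0; rewrite [X in _ <= X](big_setID A) /= (setIidPr AB) lerDl.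
by apply: sumr_ge0 => z; rewrite inE => /andP[_]; apply: F0.
Qed.

Lemma two_le (A : {set T}) (F : T -> R) a b : a != b -> a \in A -> b \in A ->
  (forall z, 0 <= F z) -> F a + F b <= \sum_(z in A) F z.
Proof.
move=> ab aA bA F0; have ->: F a + F b = \sum_(z in [set a; b]) F z.
  by rewrite big_setU1 ?inE //= big_set1.
apply: sum_sub => [|z _]; last exact: F0.
by apply/subsetP => z; rewrite !inE => /orP[]/eqP->.
Qed.

Lemma edge_neq u v : e u v -> u != v.
Proof. by apply: contraTneq => ->; rewrite eirr. Qed.

Lemma half_ok : local_resolving_fun e (fun _ : T => (2^-1 : R)).
Proof.
split=> [x|u v huv]; first by apply/andP; split; lra.
have h0 : forall z : T, 0 <= (2^-1 : R) by move=> _; lra.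
have := @two_le (Lset e u v) (fun _ => (2^-1 : R)) u v (edge_neq huv) (Lset_l huv) (Lset_r huv) h0.
by apply: le_trans; clear h0; lra.
Qed.

Lemma twin_sum (f : T -> R) x y : local_resolving_fun e f -> x != y ->
  closed_nbhd e x = closed_nbhd e y -> 1 <= f x + f y.
Proof.
move=> [f01 fL] xy H; have exy : e x y by apply: twin_adj; rewrite // eq_sym.
apply: (le_trans (fL _ _ exy)).
apply: (le_trans (@sum_sub _ _ f (Lset_twin H) _)).
  by move=> z _; case/andP: (f01 z).
by rewrite big_setU1 ?inE //= big_set1.
Qed.

Lemma lower (f : T -> R) :
  (forall u, exists v, v != u /\ closed_nbhd e u = closed_nbhd e v) ->
  local_resolving_fun e f -> #|T|%:R / 2 <= \sum_x f x.
Proof.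
move=> Htw hf; pose P u v := (v != u) && (closed_nbhd e u == closed_nbhd e v).
pose t u := odflt u [pick v | P u v].
have tP u : t u != u /\ closed_nbhd e u = closed_nbhd e (t u).
  rewrite /t; case: pickP => [v /andP[a /eqP b]|] //=.
  by case: (Htw u) => v [a b] /(_ v); rewrite /P a b eqxx.
pose g x := f x - 2^-1.
have -> : \sum_x f x = \sum_x g x + #|T|%:R / 2.
  rewrite /g sumrB sumr_const (_ : #|xpredT| = #|T|) //.
  by rewrite -[(2^-1) *+ _]mulr_natl subrK.
rewrite lerDr.
pose N := [set x | f x < 2^-1].
rewrite (bigID (mem N)) /=.
have tN x : x \in N -> t x \notin N.
  rewrite !inE -!leNgt => hx; have := twin_sum hf (tP x).1 (esym (tP x).2).
  by rewrite addrC; apply: ar2.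
have tinj : {in N &, injective t}.
  move=> x y xN yN txy; case: (eqVneq x y) => // xy; exfalso.
  have E: closed_nbhd e x = closed_nbhd e y by rewrite (tP x).2 txy -(tP y).2.
  have := twin_sum hf xy E; move: xN yN; rewrite !inE.
  exact: ar1.
have le1 : \sum_(x in t @: N) g x <= \sum_(x | x \notin N) g x.
  have ->: \sum_(x | x \notin N) g x = \sum_(x in ~: N) g x.
    by apply: eq_bigl => x /=; rewrite !inE.
  apply: sum_sub.
    by apply/subsetP => y /imsetP[x xN ->]; rewrite inE tN.
  by move=> z; rewrite !inE; exact: ar4.
rewrite (big_imset _ tinj) /= in le1.
apply: le_trans (lerD (lexx _) le1); rewrite -big_split /=.
apply: sumr_ge0 => x xN; have := twin_sum hf (tP x).1 (esym (tP x).2).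
by rewrite addrC /g; apply: ar3.
Qed.
Lemma sym_L u v : Lset e u v = Lset e v u.
Proof. by apply/setP => x; rewrite !inE eq_sym. Qed.

Section W.
Variable w : T.
Definition fw (x : T) : R := if x == w then 0 else 2^-1.

Lemma fw0 z : 0 <= fw z.
Proof. by rewrite /fw; case: ifP => _ //; rewrite invr_ge0 ler0n. Qed.

Lemma two_half (A : {set T}) a b : a != b -> a \in A -> b \in A -> a != w -> b != w ->
  1 <= \sum_(z in A) fw z.
Proof.
move=> ab aA bA aw bw; apply: le_trans (two_le ab aA bA fw0).
by rewrite /fw (negbTE aw) (negbTE bw); apply: ar6.
Qed.

Hypothesis notw : forall v, v != w -> closed_nbhd e w != closed_nbhd e v.

Lemma notwin_case v : e w v -> 1 <= \sum_(x in Lset e w v) fw x.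
Proof.
move=> ewv; have vw : v != w by rewrite eq_sym edge_neq.
have: [exists x, (x \in closed_nbhd e w) != (x \in closed_nbhd e v)].
  apply: contraR (notw vw) => /existsPn h; apply/eqP/setP => x.
  by have := h x; rewrite negbK => /eqP.
case/existsP => x hx.
have xw : x != w.
  by apply: contra hx => /eqP->; rewrite !inE eqxx esy ewv orbT.
have xv : x != v.
  by apply: contra hx => /eqP->; rewrite !inE eqxx ewv orbT.
have vx : v != x by rewrite eq_sym.
apply: (two_half vx (Lset_r ewv) _ vw xw).
case: (boolP (x \in closed_nbhd e w)) hx => hxw /= hx.
  by apply: Lset_sep; rewrite // hx.
by rewrite sym_L; apply: Lset_sep => //; [rewrite esy | move: hx; rewrite negbK].
Qed.

Lemma notwin_res : local_resolving_fun e fw.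
Proof.
split=> [x|u v huv].
  apply/andP; split; first exact: fw0.
  by rewrite /fw; case: ifP => _; [exact: ler01 | exact: ar7].
case: (eqVneq u w) => [uw|uw]; first by rewrite uw in huv *; apply: notwin_case.
case: (eqVneq v w) => [vw|vw].
  by rewrite vw in huv *; rewrite sym_L; rewrite esy in huv; apply: notwin_case.
exact: (two_half (edge_neq huv) (Lset_l huv) (Lset_r huv) uw vw).
Qed.

Lemma fw_sum : \sum_x fw x + 2^-1 = #|T|%:R / 2.
Proof.
have H1 : \sum_(x : T) (2^-1 : R) = #|T|%:R / 2.
  by rewrite sumr_const (_ : #|xpredT| = #|T|) // -[(2^-1) *+ _]mulr_natl.
rewrite -H1 (bigD1 w) //= [in RHS](bigD1 w) //= {1}/fw eqxx add0r addrC.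
congr (_ + _).
by apply: eq_bigr => x /negbTE xw; rewrite /fw xw.
Qed.
End W.
End S.

Definition twb (T : finType) (e : rel T) x y := closed_nbhd e x == closed_nbhd e y.
Definition cls (T : finType) (e : rel T) x : {set T} := [set y | twb e x y].
Definition clss (T : finType) (e : rel T) : {set {set T}} := [set cls e x | x : T].
Definition VHt (T : finType) (e : rel T) : finType := {A : {set T} | A \in clss e}.
Definition Wt (T : finType) (e : rel T) (A : VHt e) : finType := {y : T | y \in sval A}.
Lemma cls_in (T : finType) (e : rel T) x : cls e x \in clss e.
Proof. by apply/imsetP; exists x. Qed.
Definition clsV (T : finType) (e : rel T) (x : T) : VHt e :=
  exist _ (cls e x) (cls_in e x).
Lemma in_cls (T : finType) (e : rel T) x : x \in sval (clsV e x).
Proof. by rewrite inE /twb eqxx. Qed.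
Definition phit (T : finType) (e : rel T) (x : T) : {A : VHt e & Wt A} :=
  existT (@Wt T e) (clsV e x) (exist _ x (in_cls e x)).
Definition eHt (T : finType) (e : rel T) : rel (VHt e) :=
  fun A B => (A != B) && [exists x in sval A, exists y in sval B, e x y].

Lemma lexprodE (VH : finType) (eH : rel VH) (W : VH -> finType)
  (eI : forall v, rel (W v)) :
  (forall v (a b : W v), eI v a b = (a != b)) ->
  forall p q, lexprod_rel eH eI p q = eH (tag p) (tag q) || (tag p == tag q) && (p != q).
Proof.
move=> HI p q; rewrite /lexprod_rel HI; case E: (tag p == tag q) => //=.
by rewrite [p == q]eq_sym -tag_eqE /tag_eq [tag q == _]eq_sym E /= eq_sym.
Qed.

Lemma iii_ii (T : finType) (e : rel T) (VH : finType) (eH : rel VH) (W : VH -> finType)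
  (eI : forall v, rel (W v)) (phi : T -> {v : VH & W v}) :
  (forall v, 2 <= #|W v| /\ (forall a b : W v, eI v a b = (a != b))) ->
  bijective phi -> (forall x y : T, e x y = lexprod_rel eH eI (phi x) (phi y)) ->
  forall u : T, exists v : T, v != u /\ closed_nbhd e u = closed_nbhd e v.
Proof.
move=> HW [g phig gphi] He u.
have HI : forall v (a b : W v), eI v a b = (a != b) by move=> v; apply: (HW v).2.
case/card_gt1P: (HW (tag (phi u))).1 => c [d [_ _ cd]].
pose s' := if c == tagged (phi u) then d else c.
have hs' : s' != tagged (phi u).
  rewrite /s'; case: (eqVneq c (tagged (phi u))) => // <-; by rewrite eq_sym.
pose v := g (Tagged W s').
have phiv : phi v = Tagged W s' by apply: gphi.
have vu : v != u.
  by apply/eqP => vu; move: hs'; rewrite eq_sym -eq_Tagged -phiv vu eqxx.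
exists v; split => //; apply/setP => w; rewrite !inE !He !(lexprodE eH HI).
rewrite !(inj_eq (can_inj phig)) phiv /=.
case: (eqVneq w u) => [->|wu]; case: (eqVneq w v) => [wv|wv] //=.
- by rewrite eqxx vu /= !orbT.
- by rewrite eqxx vu /= !orbT.
- by rewrite wv phiv /= eqxx orbT.
Qed.

Section II.
Variables (T : finType) (e : rel T).
Hypothesis (esy : symmetric e) (eirr : irreflexive e).

Lemma clsV_surj (A : VHt e) : exists x, A = clsV e x.
Proof.
case: A => A HA; case/imsetP: (HA) => x _ Ax; exists x; apply: val_inj => /=.
by [].
Qed.

Lemma cls_eq x y : twb e x y -> cls e x = cls e y.
Proof.
by rewrite /twb => /eqP H; apply/setP => z; rewrite !inE /twb H.
Qed.

Lemma cls_eqE x y : (clsV e x == clsV e y) = twb e x y.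
Proof.
rewrite -(inj_eq val_inj) /=; apply/eqP/idP => [H|]; last exact: cls_eq.
by have := in_cls e y; rewrite /= -H inE.
Qed.

Lemma phit_inj : injective (@phit T e).
Proof. by apply: (can_inj (g := fun p => sval (tagged p))). Qed.

Lemma conn_lift x y : connect e x y -> connect (@eHt T e) (clsV e x) (clsV e y).
Proof.
move=> /connectP[p ep ->]; elim: p x ep => //= z p IH x /andP[exz /IH].
apply: connect_trans.
case: (eqVneq (clsV e x) (clsV e z)) => [->|ne]; first exact: connect0.
apply: connect1; rewrite /eHt ne /=; apply/existsP; exists x.
rewrite (in_cls e x) /=; apply/existsP; exists z; by rewrite (in_cls e z).
Qed.

Lemma ii_iii : connected_graph e ->
  (forall u : T, exists v : T, v != u /\ closed_nbhd e u = closed_nbhd e v) ->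
     exists (VH : finType) (eH : rel VH) (W : VH -> finType)
            (eI : forall v, rel (W v)) (phi : T -> {v : VH & W v}),
       [/\ simple_graph eH, connected_graph eH,
           (forall v, 2 <= #|W v| /\ (forall a b : W v, eI v a b = (a != b))),
           bijective phi &
           (forall x y : T, e x y = lexprod_rel eH eI (phi x) (phi y))].
Proof.
move=> conn Htw.
exists (VHt e), (@eHt T e), (@Wt T e), (fun A (a b : Wt A) => a != b), (@phit T e).
split.
- split=> [A B|A]; last by rewrite /eHt eqxx.
  rewrite /eHt eq_sym; congr andb.
  by apply/idP/idP => /existsP[x /andP[xA /existsP[y /andP[yB exy]]]];
    apply/existsP; exists y; rewrite yB /=; apply/existsP; exists x; rewrite xA esy.
- move=> A B; case: (clsV_surj A) => x ->; case: (clsV_surj B) => y ->.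
  exact: conn_lift.
- move=> A; split=> // ; case: (clsV_surj A) => x ->.
  case: (Htw x) => v [vx H].
  have Hv : v \in sval (clsV e x) by rewrite /= inE /twb H.
  apply/card_gt1P; exists (exist _ x (in_cls e x)), (exist _ v Hv); split=> //.
  by rewrite -(inj_eq val_inj) /= eq_sym.
- exists (fun p : {A : VHt e & Wt A} => sval (tagged p)) => // -[A [y Hy]] /=.
  move: Hy; case: (clsV_surj A) => x -> Hy.
  have E : clsV e y = clsV e x.
    by apply/eqP; rewrite cls_eqE /twb; move: Hy; rewrite /= inE /twb eq_sym.
  rewrite /phit; move: (in_cls e y); rewrite E => H.
  by rewrite (bool_irrelevance H Hy).
- move=> x y; rewrite lexprodE // (inj_eq phit_inj) /= cls_eqE.
  case: (boolP (twb e x y)) => tw /=.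
  + have ->: clsV e y = clsV e x by apply/eqP; rewrite cls_eqE /twb eq_sym.
    rewrite /eHt eqxx /=; case: (eqVneq x y) => [->|xy]; first by rewrite eirr.
    by apply: twin_adj; [rewrite eq_sym | apply/eqP].
  + rewrite orbF /eHt; have ->: (clsV e x != clsV e y) by rewrite cls_eqE.
    rewrite /=; apply/idP/idP => [exy|].
      apply/existsP; exists x; rewrite (in_cls e x) /=.
      by apply/existsP; exists y; rewrite (in_cls e y).
    case/existsP => x' /andP[]; rewrite /= inE /twb => /eqP Hx.
    case/existsP => y' /andP[]; rewrite /= inE /twb => /eqP Hy exy'.
    have : y' \in closed_nbhd e x' by rewrite inE exy' orbT.
    rewrite -Hx inE => /orP[/eqP yx|exy2].
      by move: tw; rewrite /twb Hy yx eqxx.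
    have : x \in closed_nbhd e y' by rewrite inE esy exy2 orbT.
    rewrite -Hy inE => /orP[/eqP xy|]; last by rewrite esy.
    by move: tw; rewrite xy /twb eqxx.
Qed.
End II.

Theorem theorem2p3 (R : realFieldType) (T : finType) (e : rel T) :
  simple_graph e -> connected_graph e -> 2 <= #|T| ->
  (@ldimf_is R T e (#|T|%:R / 2)%R <->
     (forall u : T, exists v : T, v != u /\ closed_nbhd e u = closed_nbhd e v))
  /\
  ((forall u : T, exists v : T, v != u /\ closed_nbhd e u = closed_nbhd e v) <->
     exists (VH : finType) (eH : rel VH) (W : VH -> finType)
            (eI : forall v, rel (W v)) (phi : T -> {v : VH & W v}),
       [/\ simple_graph eH, connected_graph eH,
           (forall v, 2 <= #|W v| /\ (forall a b : W v, eI v a b = (a != b))),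
           bijective phi &
           (forall x y : T, e x y = lexprod_rel eH eI (phi x) (phi y))]).
Proof.
move=> [esy eirr] conn c2.
split; last first.
  split; first exact: ii_iii esy eirr conn.
  by case=> VH [eH [W [eI [phi [_ _ HW hb He]]]]]; exact: iii_ii HW hb He.
split.
  case=> _ Hmin u.
  case: (boolP [exists v, (v != u) && (closed_nbhd e u == closed_nbhd e v)]).
    by case/existsP => v /andP[a /eqP b]; exists v.
  move/existsPn => H; exfalso.
  have notw : forall v, v != u -> closed_nbhd e u != closed_nbhd e v.
    by move=> v vu; have := H v; rewrite vu.
  have := Hmin _ (notwin_res esy eirr c2 R notw).
  by rewrite -(fw_sum R u); apply: ar8.
move=> Htw; split; last by move=> f hf; exact: lower Htw hf.
exists (fun _ => (2^-1)%R); split; first exact: half_ok.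
by rewrite sumr_const (_ : #|xpredT| = #|T|) // -[((2^-1) *+ _)%R]mulr_natl.
Qed.
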